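(* Under the standing setup and the algorithm/assumptions described in the context, $\displaystyle\liminf_{n\to\infty}\mathcal{M}_{\bar\gamma}^{F_n,\phi}(x_n)=0$.
   Context: Standing setup: $\mathcal{X},\mathcal{Z}$ finite-dimensional real Hilbert spaces; $\phi:\mathcal{X}\to\mathbb{R}\cup\{+\infty\}$ proper lower semicontinuous convex; $h:\mathcal{X}\to\mathbb{R}$ differentiable with $\nabla h$ Lipschitz on $\mathrm{dom}\,\phi$; $\mathfrak{S}:\mathcal{X}\to\mathcal{Z}$ continuously differentiable; $g:\mathcal{Z}\to\mathbb{R}$ Lipschitz with constant $L_g>0$ and $\eta$-weakly convex ($g+\frac\eta2\|\cdot\|^2$ convex, $\eta>0$); $F:=h+g\circ\mathfrak{S}$ and $\mathrm{argmin}_x(F+\phi)\ne\emptyset$. Notation: $\mathrm{prox}_{\gamma\phi}(\bar x)=\mathrm{argmin}_x(\phi(x)+\frac1{2\gamma}\|x-\bar x\|^2)$; Moreau envelope ${}^{\mu}g(\bar z)=\min_z(g(z)+\frac1{2\mu}\|z-\bar z\|^2)$ for $\mu\in(0,\eta^{-1})$. $F_n:=h+{}^{\mu_n}g\circ\mathfrak{S}$, and $\mathcal{M}_\gamma^{F_n,\phi}(x)=\|(x-\mathrm{prox}_{\gamma\phi}(x-\gamma\nabla F_n(x)))/\gamma\|$. Algorithm and assumptions: fix $x_1\in\mathrm{dom}\,\phi$ and $c\in(0,1)$. (a) $(\mu_n)\subset(0,\frac{1}{2\eta}]$ with $\mu_n\to0$, $\sum_n\mu_n=+\infty$, and $M^{-1}\le\mu_{n+1}/\mu_n\le1$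 for some $M\ge1$. (b) Each $\nabla F_n$ is Lipschitz on $\mathrm{dom}\,\phi$ with constant $L_{\nabla F_n}=\varpi_1+\varpi_2\mu_n^{-1}$, $\varpi_1\ge0$, $\varpi_2>0$ fixed. (c) $\gamma_n>0$ satisfies $(F_n+\phi)(\mathrm{prox}_{\gamma_n\phi}(x_n-\gamma_n\nabla F_n(x_n)))\le(F_n+\phi)(x_n)-c\gamma_n(\mathcal{M}_{\gamma_n}^{F_n,\phi}(x_n))^2$ and $\beta L_{\nabla F_n}^{-1}\le\gamma_n\le\bar\gamma$ for fixed $\beta,\bar\gamma>0$. (d) $x_{n+1}=\mathrm{prox}_{\gamma_n\phi}(x_n-\gamma_n\nabla F_n(x_n))$. *)

(* Defs.v *)
From HB Require Import structures.
From mathcomp Require Import all_boot all_order all_algebra.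
From mathcomp Require Import all_classical all_reals all_analysis.
Set Implicit Arguments. Unset Strict Implicit. Unset Printing Implicit Defensive.
Import Order.TTheory GRing.Theory Num.Theory.
Import numFieldNormedType.Exports.
Local Open Scope classical_set_scope.
Local Open Scope ring_scope.

(* Finite-dimensional real Hilbert spaces are modelled as 'rV[R]_d with the
   standard (Euclidean) inner product and norm. *)
Definition dotp {R : realType} {d : nat} (u v : 'rV[R]_d) : R := (u *m v^T) 0 0.
Definition enorm {R : realType} {d : nat} (u : 'rV[R]_d) : R := Num.sqrt (dotp u u).

Definition grad {R : realType} {d : nat} (f : 'rV[R]_d -> R^o) (x : 'rV[R]_d)
  : 'rV[R]_d := \row_i ('d f x (delta_mx 0 i : 'rV[R]_d)).

Definition dom {R : realType} {d : nat} (phi : 'rV[R]_d -> \bar R) : set 'rV[R]_d :=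
  [set x | (phi x < +oo)%E].

Definition proper_fun {R : realType} {d : nat} (phi : 'rV[R]_d -> \bar R) : Prop :=
  (exists x, (phi x < +oo)%E) /\ (forall x, (-oo < phi x)%E).

Definition econvex {R : realType} {d : nat} (phi : 'rV[R]_d -> \bar R) : Prop :=
  forall (x y : 'rV[R]_d) (t : R), 0 < t < 1 ->
    (phi (t *: x + (1 - t) *: y)%R <= t%:E * phi x + (1 - t)%:E * phi y)%E.

Definition rconvex {R : realType} {d : nat} (f : 'rV[R]_d -> R) : Prop :=
  forall (x y : 'rV[R]_d) (t : R), 0 <= t <= 1 ->
    f (t *: x + (1 - t) *: y) <= t * f x + (1 - t) * f y.

Definition is_prox {R : realType} {d : nat} (gamma : R) (phi : 'rV[R]_d -> \bar R)
  (xb p : 'rV[R]_d) : Prop :=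
  forall x, (phi p + ((2 * gamma)^-1 * enorm (p - xb)%R ^+ 2)%:E
             <= phi x + ((2 * gamma)^-1 * enorm (x - xb)%R ^+ 2)%:E)%E.

Definition prox {R : realType} {d : nat} (gamma : R) (phi : 'rV[R]_d -> \bar R)
  (xb : 'rV[R]_d) : 'rV[R]_d := xget 0 [set p | is_prox gamma phi xb p].

Definition moreau {R : realType} {p : nat} (mu : R) (g : 'rV[R]_p -> R)
  (zb : 'rV[R]_p) : R :=
  inf [set g z + (2 * mu)^-1 * enorm (z - zb) ^+ 2 | z in [set: 'rV[R]_p]].

Definition Fmu {R : realType} {m p : nat} (mu : R) (h : 'rV[R]_m -> R)
  (g : 'rV[R]_p -> R) (S : 'rV[R]_m -> 'rV[R]_p) : 'rV[R]_m -> R :=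
  fun x => h x + moreau mu g (S x).

Definition Mres {R : realType} {m : nat} (gamma : R) (F : 'rV[R]_m -> R)
  (phi : 'rV[R]_m -> \bar R) (x : 'rV[R]_m) : R :=
  enorm (gamma^-1 *: (x - prox gamma phi (x - gamma *: grad F x))).

(* Main.v *)
Require Import Defs.
From HB Require Import structures.
From mathcomp Require Import all_boot all_order all_algebra.
From mathcomp Require Import all_classical all_reals all_analysis.
From mathcomp Require Import ring lra.
Import Order.TTheory GRing.Theory Num.Theory.
Import numFieldNormedType.Exports.
Local Open Scope classical_set_scope.
Local Open Scope ring_scope.
Set Implicit Arguments. Unset Strict Implicit. Unset Printing Implicit Defensive.


Section Eucl.
Context {R : realType} {d : nat}.
Implicit Types u v w : 'rV[R]_d.

Lemma dotpE u v : dotp u v = \sum_i u 0 i * v 0 i.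
Proof. by rewrite /dotp !mxE; apply: eq_bigr => i _; rewrite !mxE. Qed.

Lemma dotpC u v : dotp u v = dotp v u.
Proof. by rewrite !dotpE; apply: eq_bigr => i _; rewrite mulrC. Qed.

Lemma dotpDl u v w : dotp (u + v) w = dotp u w + dotp v w.
Proof. by rewrite !dotpE -big_split; apply: eq_bigr => i _; rewrite !mxE mulrDl. Qed.

Lemma dotpZl a u v : dotp (a *: u) v = a * dotp u v.
Proof. by rewrite !dotpE mulr_sumr; apply: eq_bigr => i _; rewrite !mxE mulrA. Qed.

Lemma dotpNl u v : dotp (- u) v = - dotp u v.
Proof. by rewrite -scaleN1r dotpZl mulN1r. Qed.

Lemma dotpBl u v w : dotp (u - v) w = dotp u w - dotp v w.
Proof. by rewrite dotpDl dotpNl. Qed.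

Lemma dotpNr u v : dotp v (- u) = - dotp v u.
Proof. by rewrite dotpC dotpNl dotpC. Qed.

Lemma dotpDr u v w : dotp w (u + v) = dotp w u + dotp w v.
Proof. by rewrite dotpC dotpDl !(dotpC w). Qed.
Lemma dotpZr a u v : dotp v (a *: u) = a * dotp v u.
Proof. by rewrite dotpC dotpZl dotpC. Qed.
Lemma dotpBr u v w : dotp w (u - v) = dotp w u - dotp w v.
Proof. by rewrite dotpC dotpBl !(dotpC w). Qed.

Lemma dotpp_ge0 u : 0 <= dotp u u.
Proof. by rewrite dotpE; apply: sumr_ge0 => i _; rewrite -expr2 sqr_ge0. Qed.

Lemma enorm_ge0 u : 0 <= enorm u.
Proof. exact: sqrtr_ge0. Qed.

Lemma enorm_sq u : enorm u ^+ 2 = dotp u u.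
Proof. by rewrite /enorm sqr_sqrtr // dotpp_ge0. Qed.

Lemma enorm0 : enorm (0 : 'rV[R]_d) = 0.
Proof. by rewrite /enorm dotpE big1 ?sqrtr0 // => i _; rewrite mxE mul0r. Qed.

Lemma enormZ a u : enorm (a *: u) = `|a| * enorm u.
Proof.
rewrite /enorm dotpZl dotpZr mulrA -expr2 sqrtrM ?sqr_ge0 //.
by rewrite sqrtr_sqr.
Qed.

Lemma enormN u : enorm (- u) = enorm u.
Proof. by rewrite -scaleN1r enormZ normrN normr1 mul1r. Qed.

Lemma enormB u v : enorm (u - v) = enorm (v - u).
Proof. by rewrite -enormN opprB. Qed.

Lemma enorm_sqDZ u v (t : R) :
  enorm (u + t *: v) ^+ 2 = enorm u ^+ 2 + 2 * t * dotp u v + t ^+ 2 * dotp v v.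
Proof.
rewrite !enorm_sq dotpDl !dotpDr !dotpZl !dotpZr (dotpC v u); ring.
Qed.

Lemma coord_le_enorm u i : `|u 0 i| <= enorm u.
Proof.
rewrite -(sqrtr_sqr (u 0 i)) /enorm ler_wsqrtr // dotpE.
rewrite (bigD1 i) //= -expr2 lerDl sumr_ge0 // => j _; by rewrite -expr2 sqr_ge0.
Qed.

Lemma CS u v : dotp u v <= enorm u * enorm v.
Proof.
have key : forall t : R, 0 <= dotp u u - 2 * t * dotp u v + t ^+ 2 * dotp v v.
  move=> t; have := dotpp_ge0 (u - t *: v).
  rewrite dotpBl !dotpBr !dotpZl !dotpZr (dotpC v u); lra.
have Hu := enorm_sq u; have Hv := enorm_sq v.
have u0 := enorm_ge0 u; have v0 := enorm_ge0 v.
have [E|vn0] := eqVneq (enorm v) 0.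
  rewrite E mulr0.
  have vv0 : dotp v v = 0 by rewrite -enorm_sq E expr0n.
  rewrite leNgt; apply/negP => pos.
  have := key ((dotp u u + 1) / (2 * dotp u v)).
  have -> : 2 * ((dotp u u + 1) / (2 * dotp u v)) * dotp u v = dotp u u + 1.
    by field; rewrite gt_eqF.
  rewrite vv0 mulr0 addr0.
  have := dotpp_ge0 u; lra.
have vp : 0 < dotp v v by rewrite -Hv exprn_gt0 // lt_def vn0.
have := key (dotp u v / dotp v v).
have -> : dotp u u - 2 * (dotp u v / dotp v v) * dotp u v +
    (dotp u v / dotp v v) ^+ 2 * dotp v v = dotp u u - dotp u v ^+ 2 / dotp v v.
  by field; rewrite gt_eqF.
move=> k.
have k2 : dotp u v ^+ 2 <= (enorm u * enorm v) ^+ 2.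
  rewrite exprMn Hu Hv.
  have : 0 <= dotp v v * (dotp u u - dotp u v ^+ 2 / dotp v v) by rewrite mulr_ge0 // ltW.
  rewrite mulrBr mulrCA mulfV ?gt_eqF // mulr1; nra.
have : 0 <= enorm u * enorm v by rewrite mulr_ge0.
nra.
Qed.

Lemma enorm_triangle u v : enorm (u + v) <= enorm u + enorm v.
Proof.
have h1 := CS u v.
have : enorm (u + v) ^+ 2 <= (enorm u + enorm v) ^+ 2.
  rewrite enorm_sq dotpDl !dotpDr (dotpC v u) sqrrD !enorm_sq; lra.
have := enorm_ge0 (u + v); have := enorm_ge0 u; have := enorm_ge0 v; nra.
Qed.

End Eucl.


Section Moreau.
Context {R : realType} {p : nat} (g : 'rV[R]_p -> R) (Lg : R).
Hypothesis Lg_ge0 : 0 <= Lg.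
Hypothesis g_lip : forall z z', `|g z - g z'| <= Lg * enorm (z - z').

Let MS (mu : R) zb := [set g z + (2 * mu)^-1 * enorm (z - zb) ^+ 2 | z in [set: 'rV[R]_p]].

Lemma moreau_elt_lb mu zb z : 0 < mu ->
  g zb - mu * Lg ^+ 2 / 2 <= g z + (2 * mu)^-1 * enorm (z - zb) ^+ 2.
Proof.
move=> mu0.
have h1 : g zb - g z <= Lg * enorm (z - zb).
  by rewrite enormB (le_trans _ (g_lip zb z)) // ler_norm.
set r := enorm (z - zb) in h1 *.
have k : (2 * mu)^-1 * (2 * mu) = 1 by rewrite mulVf // gt_eqF // mulr_gt0.
have kp : 0 < (2 * mu)^-1 by rewrite invr_gt0 mulr_gt0.
have : 0 <= (2 * mu)^-1 * (r - mu * Lg) ^+ 2 by rewrite mulr_ge0 ?sqr_ge0 // ltW.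
have -> : (2 * mu)^-1 * (r - mu * Lg) ^+ 2 =
   (2 * mu)^-1 * r ^+ 2 - ((2 * mu)^-1 * (2 * mu)) * r * Lg + ((2 * mu)^-1 * (2 * mu)) * mu * Lg ^+ 2 / 2.
  by field; rewrite gt_eqF.
rewrite k; lra.
Qed.

Lemma moreau_has_lb mu zb : 0 < mu -> has_lbound (MS mu zb).
Proof.
move=> mu0; exists (g zb - mu * Lg ^+ 2 / 2) => _ [z _ <-].
exact: moreau_elt_lb.
Qed.

Lemma moreau_lb mu zb : 0 < mu -> g zb - mu * Lg ^+ 2 / 2 <= moreau mu g zb.
Proof.
move=> mu0; apply: lb_le_inf; first by exists (g zb + (2 * mu)^-1 * enorm (zb - zb) ^+ 2), zb.
by move=> _ [z _ <-]; exact: moreau_elt_lb.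
Qed.

Lemma moreau_le_elt mu zb z : 0 < mu ->
  moreau mu g zb <= g z + (2 * mu)^-1 * enorm (z - zb) ^+ 2.
Proof. by move=> mu0; apply: ge_inf; [exact: moreau_has_lb|exists z]. Qed.

Lemma moreau_mono mu mu' zb : 0 < mu' -> mu' <= mu ->
  moreau mu' g zb <= moreau mu g zb + (mu - mu') * Lg ^+ 2 / 2.
Proof.
move=> mu'0 le_mu; have mu0 : 0 < mu by apply: lt_le_trans le_mu.
apply/ler_addgt0Pr => e e0.
have [_ [z _ <-] ze] : exists2 v, MS mu zb v & v < moreau mu g zb + e.
  apply: inf_adherent => //; split; first by exists (g zb + (2 * mu)^-1 * enorm (zb - zb) ^+ 2), zb.
  exact: moreau_has_lb.
set t := mu' / mu.
have t0 : 0 < t by rewrite divr_gt0.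
have t1 : t <= 1 by rewrite ler_pdivrMr // mul1r.
pose w := zb + t *: (z - zb).
apply: (le_trans (moreau_le_elt zb w mu'0)).
have ew : enorm (w - zb) = t * enorm (z - zb).
  by rewrite /w addrC addKr enormZ ger0_norm // ltW.
have ewz : enorm (w - z) = (1 - t) * enorm (z - zb).
  rewrite -(ger0_norm (_ : 0 <= 1 - t)); last by lra.
  rewrite -enormZ enormB /w; congr enorm.
  by rewrite scalerBl scale1r scalerBr; rewrite opprD opprB; rewrite -[in RHS]addrA; congr (_ + _); rewrite addrC.
have gw : g w <= g z + Lg * ((1 - t) * enorm (z - zb)).
  by rewrite -ewz; have := g_lip w z; rewrite ler_norml; lra.
rewrite ew.
set r := enorm (z - zb) in gw ze *.
have r0 : 0 <= r by exact: enorm_ge0.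
have hmu' : mu' = t * mu by rewrite /t divfK // gt_eqF.
rewrite hmu' in mu'0 *.
suff : (2 * (t * mu))^-1 * (t * r) ^+ 2 + Lg * ((1 - t) * r) <=
      (2 * mu)^-1 * r ^+ 2 + (mu - t * mu) * Lg ^+ 2 / 2 by lra.
have -> : (2 * (t * mu))^-1 * (t * r) ^+ 2 = t * ((2 * mu)^-1 * r ^+ 2).
  by field; rewrite !gt_eqF.
have : 0 <= (1 - t) * ((2 * mu)^-1 * (r - mu * Lg) ^+ 2).
  by rewrite mulr_ge0 ?subr_ge0 // mulr_ge0 ?sqr_ge0 // ltW // invr_gt0 mulr_gt0.
have -> : (1 - t) * ((2 * mu)^-1 * (r - mu * Lg) ^+ 2) =
  (1 - t) * ((2 * mu)^-1 * r ^+ 2) - (1 - t) * r * Lg + (1 - t) * mu * Lg ^+ 2 / 2.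
  by field; rewrite gt_eqF.
lra.
Qed.

End Moreau.


Lemma small_t_le {R : realType} (A B K : R) : 0 <= K ->
  (forall t, 0 < t < 1 -> A <= B + t * K) -> A <= B.
Proof.
move=> K0 H; apply/ler_addgt0Pr => e e0.
have d0 : 0 < e + K + 1 by lra.
have := H (e / (e + K + 1)).
have t0 : 0 < e / (e + K + 1) by rewrite divr_gt0.
have t1 : e / (e + K + 1) < 1 by rewrite ltr_pdivrMr // mul1r; lra.
have tt : 0 < e / (e + K + 1) < 1 by rewrite t0 t1.
move=> /(_ tt) hA.
apply: (le_trans hA); rewrite lerD2l.
rewrite mulrAC ler_pdivrMr //; nra.
Qed.

Section Prox.
Context {R : realType} {d : nat} (phi : 'rV[R]_d -> \bar R).
Hypothesis phi_convex : econvex phi.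

Lemma prox_VI gam y pp z rp rz : 0 < gam -> is_prox gam phi y pp ->
  phi pp = rp%:E -> phi z = rz%:E ->
  rp - rz <= gam^-1 * dotp (y - pp) (pp - z).
Proof.
move=> g0 Hp Ep Ez.
set D := dotp (pp - y) (z - pp).
set N := dotp (z - pp) (z - pp).
have eD : dotp (y - pp) (pp - z) = D.
  by rewrite /D -(opprB pp y) -(opprB z pp) dotpNl dotpNr opprK.
rewrite eD.
have k0 : 0 < (2 * gam)^-1 by rewrite invr_gt0 mulr_gt0.
apply: (@small_t_le _ _ _ ((2 * gam)^-1 * N)); first by apply: mulr_ge0; [exact: ltW|exact: dotpp_ge0].
move=> t tt; have /andP[t0 t1] := tt.
pose w := t *: z + (1 - t) *: pp.
have cv := phi_convex z pp tt.
rewrite -/w Ep Ez -!EFinM -EFinD in cv.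
have hp := Hp w.
have := le_trans hp (leeD2r _ cv).
rewrite Ep -!EFinD lee_fin.
have ew : w - y = (pp - y) + t *: (z - pp).
  by apply/rowP => i; rewrite !mxE; ring.
rewrite ew enorm_sqDZ -/D -/N.
move=> h.
have : t * (rp - rz) <= t * (gam^-1 * D + t * ((2 * gam)^-1 * N)).
  have -> : t * (gam^-1 * D + t * ((2 * gam)^-1 * N)) =
    (2 * gam)^-1 * (2 * t * D + t * (t * N)).
    by field; rewrite gt_eqF.
  move: h; rewrite mulrDr (mulrDr (2 * gam)^-1); lra.
by rewrite ler_pM2l.
Qed.

Lemma prox_mono g1 g2 x v p1 p2 r1 r2 : 0 < g1 -> g1 <= g2 ->
  is_prox g1 phi (x - g1 *: v) p1 -> is_prox g2 phi (x - g2 *: v) p2 ->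
  phi p1 = r1%:E -> phi p2 = r2%:E ->
  g2^-1 * enorm (x - p2) <= g1^-1 * enorm (x - p1).
Proof.
move=> g10 g12 H1 H2 E1 E2.
have g20 : 0 < g2 by apply: lt_le_trans g12.
have V1 := prox_VI g10 H1 E1 E2.
have V2 := prox_VI g20 H2 E2 E1.
set a := x - p1 in V1 V2 *; set b := x - p2 in V1 V2 *.
have e1 : x - g1 *: v - p1 = a - g1 *: v by apply/rowP => i; rewrite !mxE; ring.
have e2 : x - g2 *: v - p2 = b - g2 *: v by apply/rowP => i; rewrite !mxE; ring.
have e3 : p1 - p2 = b - a by apply/rowP => i; rewrite !mxE; ring.
have e4 : p2 - p1 = a - b by apply/rowP => i; rewrite !mxE; ring.
rewrite e1 e3 in V1; rewrite e2 e4 in V2.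
clear e1 e2 e3 e4; clearbody a b.
rewrite !dotpBl !dotpBr ?dotpZl ?dotpZr in V1 V2.
have cs := CS a b.
have Ha := enorm_sq a; have Hb := enorm_sq b.
have a0 := enorm_ge0 a; have b0 := enorm_ge0 b.
rewrite (dotpC b a) in V2.
set P := dotp a b in V1 V2 cs; set A := enorm a in Ha a0 cs *; set B := enorm b in Hb b0 cs *.
set va := dotp v a in V1 V2; set vb := dotp v b in V1 V2.
rewrite -Ha -Hb in V1 V2.
have i1 : g1^-1 * g1 = 1 by rewrite mulVf // gt_eqF.
have i2 : g2^-1 * g2 = 1 by rewrite mulVf // gt_eqF.
have j1 : 0 < g1^-1 by rewrite invr_gt0.
have j2 : 0 < g2^-1 by rewrite invr_gt0.
have key : 0 <= g1^-1 * (P - A ^+ 2) + g2^-1 * (P - B ^+ 2).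
  move: V1 V2; rewrite !mulrBr !mulrA i1 i2 !mul1r; lra.
rewrite leNgt; apply/negP => H.
have hBA : A < B.
  have : g2^-1 <= g1^-1 by rewrite lef_pV2 ?posrE.
  nra.
have : g1^-1 * (A * B - A ^+ 2) + g2^-1 * (A * B - B ^+ 2) < 0.
  have -> : g1^-1 * (A * B - A ^+ 2) + g2^-1 * (A * B - B ^+ 2) = (B - A) * (g1^-1 * A - g2^-1 * B) by ring.
  rewrite pmulr_rlt0 ?subr_gt0 //; lra.
nra.
Qed.

End Prox.


Lemma lsc_min {R : realType} {T : topologicalType} (f : T -> \bar R) (K : set T) :
  lower_semicontinuous f -> compact K -> K !=set0 ->
  exists2 p, K p & forall w, K w -> (f p <= f w)%E.
Proof.
move=> lsc cK [k0 Kk0].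
set m := ereal_inf [set f z | z in K].
have mlb : forall w, K w -> (m <= f w)%E by move=> w Kw; apply: ereal_inf_lbound; exists w.
have [mtop|mfin] := eqVneq m +oo%E.
  exists k0 => // w Kw; have := mlb w Kw; rewrite mtop leye_eq => /eqP ->; exact: leey.
have [c0 c0m] : exists c : R, (m < c%:E)%E.
  have aux : forall e : \bar R, e != +oo%E -> exists c : R, (e < c%:E)%E.
    case => [r| |] // _; first by exists (r + 1); rewrite lte_fin; lra.
    by exists 0; rewrite ltNye.
  exact: aux.
pose D := [set c : R | (m < c%:E)%E].
pose B := fun c : R => K `&` [set z | (f z < c%:E)%E].
have FF : Filter (filter_from D B).
  apply: filter_from_filter; first by exists c0.
  move=> i j Di Dj; exists (Num.min i j).
    by rewrite /D /= EFin_min lt_min; apply/andP; split.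
  move=> z [Kz fz]; split; split => //; apply: (lt_le_trans fz);
    by rewrite lee_fin ge_min lexx ?orbT.
have PF : ProperFilter (filter_from D B).
  apply: filter_from_proper => c Dc.
  have [_ [z Kz <-] fzc] := ereal_inf_lt Dc.
  by exists z.
have FK : filter_from D B K by exists c0 => // z [].
have [pp [Kp clp]] := cK _ PF FK.
exists pp => // w Kw; apply: le_trans (mlb w Kw).
rewrite leNgt; apply/negP => mfp.
have [c mc cf] : exists2 c : R, (m < c%:E)%E & (c%:E < f pp)%E.
  have aux : forall e e' : \bar R, (e < e')%E -> e != +oo%E ->
     exists2 c : R, (e < c%:E)%E & (c%:E < e')%E.
    move=> e e'; case: e => [r| |]; last first.
    - case: e' => [s| |] //.
        by move=> _ _; exists (s - 1); [rewrite ltNye|rewrite lte_fin; lra].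
      by move=> _ _; exists 0; [rewrite ltNye|rewrite ltey].
    - by [].
    case: e' => [s| |] //.
      by rewrite lte_fin => rs _; exists ((r + s) / 2); rewrite lte_fin; lra.
    by move=> _ _; exists (r + 1); [rewrite lte_fin; lra|rewrite ltey].
  exact: aux.
have [V nV HV] := lsc pp c cf.
have := clp (B c) V _ nV.
case; first by exists c.
move=> z [[_ fzc] Vz].
have := HV z Vz; rewrite ltNge => /negP; apply; exact: ltW.
Qed.

Lemma lsc_add_cont {R : realType} {T : topologicalType} (f : T -> \bar R) (q : T -> R) :
  lower_semicontinuous f -> continuous q ->
  lower_semicontinuous (fun z => (f z + (q z)%:E)%E).
Proof.
move=> lf cq x a.
have aux : (a%:E < f x + (q x)%:E)%E -> exists2 b : R, (b%:E < f x)%E & a < b + q x.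
  case: (f x) => [r| |] //=.
  - by rewrite -EFinD lte_fin => h; exists ((r + a - q x) / 2); rewrite ?lte_fin; lra.
  - by move=> _; exists (a - q x + 1); [rewrite ltey|lra].
move=> afx; have [b bf ab] := aux afx.
have [V nV HV] := lf x b bf.
have nW : \forall t \near x, a - b < q t.
  by apply: (@cvgr_gt R T (nbhs x) _ q (q x) (cq x) (a - b)); lra.
exists (V `&` [set t | a - b < q t]); first exact: filterI.
move=> t [Vt Wt]; have := HV t Vt.
case: (f t) => [s| |] //=.
  by rewrite -EFinD !lte_fin => bs; move: Wt => /= Wt; lra.
by move=> _; rewrite /= ltey.
Qed.

Section Exist.
Context {R : realType} {d : nat}.

Definition box (z0 : 'rV[R]_d) (r : R) := [set z : 'rV[R]_d | forall i, `|z 0 i - z0 0 i| <= r].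

Lemma box_compact z0 r : compact (box z0 r).
Proof.
have := @rV_compact R d (fun i => `[z0 0 i - r, z0 0 i + r]%classic) (fun i => @segment_compact R (z0 0 i - r) (z0 0 i + r)).
congr compact; apply/seteqP; split => z /= H i; have := H i.
  by rewrite /= in_itv /= -ler_distl.
by rewrite /= in_itv /= -ler_distl.
Qed.

Lemma q_cont (y : 'rV[R]_d) (c : R) : continuous (fun z : 'rV[R]_d => c * enorm (z - y) ^+ 2).
Proof.
have -> : (fun z : 'rV[R]_d => c * enorm (z - y) ^+ 2) =
  (fun z : 'rV[R]_d => c * \sum_i ((z 0 i - y 0 i) * (z 0 i - y 0 i))).
  apply: funext => z; rewrite enorm_sq dotpE; congr (_ * _); apply: eq_bigr => i _.
  by rewrite !mxE.
have H : continuous (fun z : 'rV[R]_d => \sum_i ((z 0 i - y 0 i) * (z 0 i - y 0 i))).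
  apply: (@continuous_big R _ +%R 0 xpredT (@add_continuous R) _ (index_enum _) (fun i (z : 'rV[R]_d) => (z 0 i - y 0 i) * (z 0 i - y 0 i))).
  move=> i _.
  have hc : continuous (fun z : 'rV[R]_d => z 0 i - y 0 i).
    move=> z; have := @continuousB _ _ _ (fun z : 'rV[R]_d => z 0 i) (fun=> y 0 i) z (@coord_continuous R 1 d 0 i z) (@cst_continuous _ _ (y 0 i) z); exact.
  move=> z; have := @continuousM _ _ _ _ z (hc z) (hc z); exact.
move=> z; have := @continuousM _ _ (fun=> c) _ z (@cst_continuous _ _ c z) (H z); exact.
Qed.

Variable phi : 'rV[R]_d -> \bar R.
Hypothesis phi_proper : proper_fun phi.
Hypothesis phi_lsc : lower_semicontinuous phi.
Hypothesis phi_convex : econvex phi.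

Lemma fin_of_lt_pinfty z : (phi z < +oo)%E -> phi z = (fine (phi z))%:E.
Proof.
move=> h; have := phi_proper.2 z; move: h; case: (phi z) => //.
Qed.

Lemma phi_affine_lb : exists z0 r0 K, phi z0 = r0%:E /\ 0 <= K /\
  forall z, (((r0 - K * (2 + enorm (z - z0))))%:E <= phi z)%E.
Proof.
have [z0 z0f] := phi_proper.1.
set r0 := fine (phi z0).
have E0 : phi z0 = r0%:E by exact: fin_of_lt_pinfty.
have ne1 : box z0 1 !=set0 by exists z0 => i; rewrite subrr normr0.
have [m1 Bm1 Hm1] := @lsc_min R _ phi (box z0 1) phi_lsc (@box_compact z0 1) ne1.
have m1f : (phi m1 < +oo)%E.
  have B0 : box z0 1 z0 by move=> i; rewrite subrr normr0.
  by apply: le_lt_trans (Hm1 z0 B0) _; rewrite E0 ltey.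
set mu1 := fine (phi m1).
have E1 : phi m1 = mu1%:E by exact: fin_of_lt_pinfty.
have K0 : mu1 <= r0.
  by rewrite -lee_fin -E0 -E1; apply: Hm1 => i; rewrite subrr normr0.
exists z0, r0, (r0 - mu1); split => //; split; first lra.
move=> z; set s := enorm (z - z0).
have s0 : 0 <= s by exact: enorm_ge0.
set lam := (2 + s)^-1.
have l0 : 0 < lam by rewrite invr_gt0; lra.
have l1 : lam < 1 by rewrite invf_lt1; lra.
have ll : lam * (2 + s) = 1 by rewrite mulVf // gt_eqF // ; lra.
have tt : 0 < lam < 1 by rewrite l0 l1.
have cv := phi_convex z z0 tt.
set w := lam *: z + (1 - lam) *: z0 in cv.
have ew : w - z0 = lam *: (z - z0) by apply/rowP => i; rewrite !mxE; ring.
have Bw : box z0 1 w.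
  move=> i; have -> : w 0 i - z0 0 i = (w - z0) 0 i by rewrite !mxE.
  apply: (le_trans (coord_le_enorm _ i)).
  rewrite ew enormZ ger0_norm ?ltW // -/s.
  have : lam * s <= lam * (2 + s) by rewrite ler_pM2l //; lra.
  lra.
have := le_trans (Hm1 w Bw) cv.
rewrite E1 E0.
have := phi_proper.2 z.
case: (phi z) => [rz| |] //; last by move=> _ _; exact: leey.
move=> _; rewrite -!EFinM -EFinD !lee_fin => h.
have : mu1 * (2 + s) <= (lam * rz + (1 - lam) * r0) * (2 + s) by rewrite ler_pM2r //; lra.
rewrite mulrDl -!mulrA (mulrC rz) (mulrC r0) !mulrA ll mulrBl ll mul1r.
nra.
Qed.
Lemma prox_exists gam y : 0 < gam -> exists pp, is_prox gam phi y pp.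
Proof.
move=> g0.
have [z0 [r0 [K [E0 [K0 lb]]]]] := phi_affine_lb.
set k := (2 * gam)^-1.
have k0 : 0 < k by rewrite invr_gt0 mulr_gt0.
pose q := fun z : 'rV[R]_d => k * enorm (z - y) ^+ 2.
pose f := fun z => (phi z + (q z)%:E)%E.
have lf : lower_semicontinuous f by apply: lsc_add_cont => //; exact: q_cont.
set c0 := enorm (z0 - y).
have c00 : 0 <= c0 by exact: enorm_ge0.
set Q0 := q z0.
have Q00 : 0 <= Q0 by rewrite /Q0 /q; apply: mulr_ge0; [exact: ltW|exact: sqr_ge0].
set T := (K + K * c0 + 2 * K + Q0 + 1) / k + 1.
have T1 : 1 <= T.
  have : 0 <= (K + K * c0 + 2 * K + Q0 + 1) / k by rewrite divr_ge0 ?ltW //; nra.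
  rewrite /T; lra.
have kT : k * T = K + K * c0 + 2 * K + Q0 + 1 + k by rewrite /T mulrDr mulr1 mulrCA mulfV ?gt_eqF // mulr1.
set rho := c0 + T.
have far : forall z, rho < enorm (z - z0) -> (f z0 < f z)%E.
  move=> z hz; rewrite /f E0.
  have := lb z; have := phi_proper.2 z.
  case: (phi z) => [rz| |] //; last by move=> _ _; rewrite ltey.
  move=> _; rewrite lee_fin => hrz; rewrite -!EFinD lte_fin.
  set sz := enorm (z - z0) in hz hrz.
  set e := enorm (z - y).
  have tri : sz <= e + c0.
    rewrite /sz; have -> : z - z0 = (z - y) + (y - z0) by apply/rowP => i; rewrite !mxE; ring.
    by rewrite /c0 (enormB z0 y); exact: enorm_triangle.
  set u := sz - c0.
  have uT : T < u by rewrite /u; rewrite /rho in hz; lra.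
  have ue : u <= e by rewrite /u; lra.
  have u0 : 0 <= u by lra.
  have e2 : u ^+ 2 <= e ^+ 2 by rewrite ler_sqr // ?nnegrE //; lra.
  have h1 : k * T * u <= k * u ^+ 2.
    by rewrite expr2 -mulrA ler_pM2l // ler_pM2r //; lra.
  have h2 : K + K * c0 + 2 * K + Q0 + 1 <= k * T by rewrite kT; lra.
  have h3 : (K + K * c0 + 2 * K + Q0 + 1) * u <= k * T * u by rewrite ler_pM2r //; lra.
  have h4 : (K * c0 + 2 * K + Q0 + 1) <= (K * c0 + 2 * K + Q0 + 1) * u.
    by rewrite ler_pMr; [lra|nra].
  have h5 : k * u ^+ 2 <= k * e ^+ 2 by rewrite ler_pM2l.
  rewrite /Q0 /q -/e in Q00 h2 h3 h4 *.
  have : sz = u + c0 by rewrite /u; lra.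
  move=> esz; rewrite esz in hrz.
  move: h3 h4; rewrite !mulrDl; nra.
have neB : box z0 rho !=set0 by exists z0 => i; rewrite subrr normr0 /rho; lra.
have [pp Bp Hp] := @lsc_min R _ f (box z0 rho) lf (@box_compact z0 rho) neB.
exists pp => w.
have B0 : box z0 rho z0 by move=> i; rewrite subrr normr0 /rho; lra.
have [Bw|nBw] := pselect (box z0 rho w); first exact: Hp.
apply: (le_trans (Hp z0 B0)); apply: ltW; apply: far.
move: nBw => /existsNP [i /negP]; rewrite -ltNge => hi.
apply: (lt_le_trans hi).
have -> : w 0 i - z0 0 i = (w - z0) 0 i by rewrite !mxE.
exact: coord_le_enorm.
Qed.

Lemma prox_fin gam y pp : is_prox gam phi y pp -> phi pp = (fine (phi pp))%:E.
Proof.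
move=> H; apply: fin_of_lt_pinfty.
have [z0 z0f] := phi_proper.1.
have := H z0; case E: (phi pp) => [r| |] //; [by rewrite ltey| ].
move: z0f; case: (phi z0) => //.
Qed.

Lemma prox_spec gam y : 0 < gam -> is_prox gam phi y (prox gam phi y).
Proof. by move=> g0; rewrite /prox; apply: xgetPex; exact: prox_exists. Qed.

End Exist.

Unset Implicit Arguments. Set Strict Implicit.

Theorem theorem2 (R : realType) (m p : nat)
  (phi : 'rV[R]_m -> \bar R) (h : 'rV[R]_m -> R)
  (S : 'rV[R]_m -> 'rV[R]_p) (g : 'rV[R]_p -> R)
  (Lh Lg eta : R)
  (* standing setup *)
  (phi_proper : proper_fun phi)
  (phi_lsc : lower_semicontinuous phi)
  (phi_convex : econvex phi)
  (h_diff : forall x, differentiable (h : 'rV[R]_m -> R^o) x)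
  (h_lip : forall x y, x \in dom phi -> y \in dom phi ->
     enorm (grad (h : 'rV[R]_m -> R^o) x - grad (h : 'rV[R]_m -> R^o) y)
       <= Lh * enorm (x - y))
  (S_diff : forall x, differentiable S x)
  (S_C1 : forall i : 'I_m, continuous (fun x => 'd S x (delta_mx 0 i : 'rV[R]_m)))
  (Lg_pos : 0 < Lg)
  (g_lip : forall z z', `|g z - g z'| <= Lg * enorm (z - z'))
  (eta_pos : 0 < eta)
  (g_weak : rconvex (fun z => g z + eta / 2 * enorm z ^+ 2))
  (argmin_ne : exists xs, forall x,
     ((h xs + g (S xs))%:E + phi xs <= (h x + g (S x))%:E + phi x)%E)
  (* algorithm and assumptions *)
  (x : nat -> 'rV[R]_m) (c : R) (mu gamma : nat -> R)
  (M varpi1 varpi2 beta gbar : R)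
  (x0_dom : x 0%N \in dom phi)
  (c_range : 0 < c < 1)
  (* (a) *)
  (mu_range : forall n, 0 < mu n <= (2 * eta)^-1)
  (mu_to0 : mu @ \oo --> 0)
  (mu_sum : (fun n => \sum_(0 <= k < n) mu k) @ \oo --> +oo)
  (M_ge1 : 1 <= M)
  (mu_ratio : forall n, M^-1 <= mu n.+1 / mu n <= 1)
  (* (b) *)
  (varpi1_ge0 : 0 <= varpi1) (varpi2_pos : 0 < varpi2)
  (gradF_lip : forall n y z, y \in dom phi -> z \in dom phi ->
     enorm (grad (Fmu (mu n) h g S : 'rV[R]_m -> R^o) y
            - grad (Fmu (mu n) h g S : 'rV[R]_m -> R^o) z)
       <= (varpi1 + varpi2 / mu n) * enorm (y - z))
  (* (c) *)
  (beta_pos : 0 < beta) (gbar_pos : 0 < gbar)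
  (gamma_pos : forall n, 0 < gamma n)
  (descent : forall n,
     ((Fmu (mu n) h g S (prox (gamma n) phi
          (x n - gamma n *: grad (Fmu (mu n) h g S : 'rV[R]_m -> R^o) (x n))))%:E
      + phi (prox (gamma n) phi
          (x n - gamma n *: grad (Fmu (mu n) h g S : 'rV[R]_m -> R^o) (x n)))
      <= (Fmu (mu n) h g S (x n))%:E + phi (x n)
         - (c * gamma n * Mres (gamma n) (Fmu (mu n) h g S) phi (x n) ^+ 2)%:E)%E)
  (gamma_range : forall n,
     beta / (varpi1 + varpi2 / mu n) <= gamma n <= gbar)
  (* (d) *)
  (x_next : forall n, x n.+1 =
     prox (gamma n) phi
       (x n - gamma n *: grad (Fmu (mu n) h g S : 'rV[R]_m -> R^o) (x n))) :
  limn_einf (fun n => (Mres gbar (Fmu (mu n) h g S) phi (x n))%:E) = 0%E.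
Proof.

Proof.
pose F n := Fmu (mu n) h g S.
pose G n := grad (F n : 'rV[R]_m -> R^o) (x n).
pose Mn n := Mres (gamma n) (F n) phi (x n).
pose Mb n := Mres gbar (F n) phi (x n).
have Lg0 : 0 <= Lg by exact: ltW.
have Mres_eq : forall gam n, 0 < gam -> Mres gam (F n) phi (x n) =
    gam^-1 * enorm (x n - prox gam phi (x n - gam *: G n)).
  by move=> gam n g0; rewrite /Mres enormZ ger0_norm // invr_ge0 ltW.
have gbar_ge : forall n, gamma n <= gbar by move=> n; have /andP[] := gamma_range n.
have MbM : forall n, Mb n <= Mn n.
  move=> n; rewrite /Mb /Mn (Mres_eq gbar n gbar_pos) (Mres_eq (gamma n) n (gamma_pos n)).
  have H1 := prox_spec phi_proper phi_lsc phi_convex (x n - gamma n *: G n) (gamma_pos n).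
  have H2 := prox_spec phi_proper phi_lsc phi_convex (x n - gbar *: G n) gbar_pos.
  have := prox_mono phi_convex (gamma_pos n) (gbar_ge n) H1 H2 (prox_fin phi_proper H1) (prox_fin phi_proper H2).
  exact.
have Mb0 : forall n, 0 <= Mb n by move=> n; exact: enorm_ge0.
pose r n := fine (phi (x n)).
have fin : forall n, phi (x n) = (r n)%:E.
  case => [|n].
    apply: (fin_of_lt_pinfty phi_proper); exact: (set_mem x0_dom).
  rewrite /r x_next; apply: (prox_fin phi_proper).
  exact: (prox_spec phi_proper phi_lsc phi_convex _ (gamma_pos n)).
have desc : forall n, F n (x n.+1) + r n.+1 <= F n (x n) + r n - c * gamma n * Mn n ^+ 2.
  move=> n; have := descent n; rewrite -x_next fin fin -!EFinD lee_fin.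
  by [].
have mu_dec : forall n, mu n.+1 <= mu n.
  move=> n; have /andP[_ h1] := mu_ratio n; have /andP[m0 _] := mu_range n.
  by rewrite ler_pdivrMr // mul1r in h1.
have Fstep : forall n y, F n.+1 y <= F n y + (mu n - mu n.+1) * Lg ^+ 2 / 2.
  move=> n y; rewrite /F /Fmu -addrA lerD2l.
  have /andP[m1 _] := mu_range n.+1.
  exact: (moreau_mono g_lip (S y) m1 (mu_dec n)).
pose w n := F n (x n) + r n + mu n * Lg ^+ 2 / 2.
pose a n := c * gamma n * Mn n ^+ 2.
have wstep : forall n, w n.+1 <= w n - a n.
  move=> n; have := desc n; have := Fstep n (x n.+1); rewrite /w /a; lra.
have [xs Hxs] := argmin_ne.
have xsfin : phi xs = (fine (phi xs))%:E.
  apply: (fin_of_lt_pinfty phi_proper).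
  have := Hxs (x 0%N); rewrite fin.
  by case: (phi xs) => // r0 _; rewrite ltey.
pose Fs := h xs + g (S xs) + fine (phi xs).
have wlb : forall n, Fs <= w n.
  move=> n; have := Hxs (x n); rewrite fin xsfin -!EFinD lee_fin => h1.
  have /andP[m0 _] := mu_range n.
  have := moreau_lb g_lip (S (x n)) m0.
  rewrite /w /F /Fmu /Fs; lra.
have a0 : forall n, 0 <= a n.
  move=> n; rewrite /a; apply: mulr_ge0; last exact: sqr_ge0.
  by apply: mulr_ge0; [have /andP[] := c_range; move=> ? ?; exact: ltW|exact: ltW].
have sumb : forall N, \sum_(0 <= k < N) a k <= w 0%N - Fs.
  have ind : forall N, w N <= w 0%N - \sum_(0 <= k < N) a k.
    elim => [|N IH]; first by rewrite big_geq // subr0.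
    rewrite big_nat_recr //=; have := wstep N; lra.
  move=> N; have := ind N; have := wlb N; lra.
set A := varpi1 * (2 * eta)^-1 + varpi2.
have A0 : 0 < A.
  have : 0 <= varpi1 * (2 * eta)^-1 by rewrite mulr_ge0 // invr_ge0 mulr_ge0 // ltW.
  rewrite /A; lra.
set kap := beta / A.
have kap0 : 0 < kap by rewrite divr_gt0.
have gam_lb : forall n, kap * mu n <= gamma n.
  move=> n; have /andP[h1 _] := gamma_range n; apply: le_trans h1.
  have /andP[m0 m1] := mu_range n.
  set D := varpi1 * mu n + varpi2.
  have D0 : 0 < D.
    have : 0 <= varpi1 * mu n by rewrite mulr_ge0 // ltW.
    rewrite /D; lra.
  have -> : beta / (varpi1 + varpi2 / mu n) = beta * mu n / D.
    have -> : varpi1 + varpi2 / mu n = D / mu n.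
      by rewrite /D; field; rewrite gt_eqF.
    by rewrite invf_div mulrA.
  rewrite /kap mulrAC ler_pM2l ?mulr_gt0 // lef_pV2 ?posrE //.
  rewrite /A /D lerD2r ler_wpM2l //.
have c0 : 0 < c by have /andP[] := c_range.
have key : forall e, 0 < e -> forall n, exists2 k, (n <= k)%N & Mb k <= e.
  move=> e e0 n.
  have [//|H] := pselect (exists2 k, (n <= k)%N & Mb k <= e).
  exfalso.
  have Hk : forall k, (n <= k)%N -> e < Mb k.
    by move=> k nk; rewrite ltNge; apply/negP => hk; apply: H; exists k.
  set W := w 0%N - Fs.
  set cc := c * kap * e ^+ 2.
  have cc0 : 0 < cc by rewrite /cc; apply: mulr_gt0; [exact: mulr_gt0|exact: exprn_gt0].
  have bnd : forall N, (n <= N)%N -> cc * \sum_(n <= k < N) mu k <= W.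
    move=> N nN; apply: le_trans (sumb N).
    rewrite (@big_cat_nat _ _ _ n 0 N _ _ (leq0n n) nN) /= -[X in X <= _]add0r.
    apply: lerD; first by apply: sumr_ge0 => k _; exact: a0.
    rewrite mulr_sumr; apply: ler_sum_nat => k /andP[nk _].
    have hM : e ^+ 2 <= Mn k ^+ 2.
      have := Hk k nk; have := MbM k; have := Mb0 k; move=> *.
      rewrite ler_sqr ?nnegrE; [lra|lra|lra].
    have hg := gam_lb k.
    have /andP[mk0 _] := mu_range k.
    rewrite /cc /a.
    have : c * (kap * mu k) * e ^+ 2 <= c * gamma k * Mn k ^+ 2.
      apply: ler_pM; [|exact: sqr_ge0| |exact: hM].
      - by rewrite mulr_ge0 ?ltW // mulr_gt0.
      - by rewrite ler_pM2l.
    by have -> : c * kap * e ^+ 2 * mu k = c * (kap * mu k) * e ^+ 2 by ring.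
  set B := \sum_(0 <= k < n) mu k + W / cc + 1.
  have := mu_sum; move/cvgryPge => /(_ B) [N0 _ HN].
  have nN : (n <= maxn N0 n)%N by rewrite leq_maxr.
  have := HN (maxn N0 n) (leq_maxl _ _).
  rewrite /= (@big_cat_nat _ _ _ n 0 (maxn N0 n) _ _ (leq0n n) nN) /=.
  have h2 : \sum_(n <= k < maxn N0 n) mu k <= W / cc.
    by rewrite ler_pdivlMr // mulrC; exact: bnd.
  rewrite /B; lra.
rewrite limn_einf_lim.
have -> : einfs (fun n => (Mres gbar (Fmu (mu n) h g S) phi (x n))%:E) = fun=> 0%E.
  apply: funext => n; apply/eqP; rewrite eq_le; apply/andP; split.
  - apply/lee_addgt0Pr => e e0; rewrite add0e; apply: ereal_inf_le.
    have [k nk hk] := key e e0 n.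
    by exists (Mb k)%:E; [exists k|rewrite lee_fin].
  - apply: le_ereal_inf_tmp => _ [k _ <-]; rewrite lee_fin; exact: Mb0.
exact: lim_cst.
Qed.
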